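(* Suppose $n$ is even. Let $\ell$ be the smallest integer $\ge0$ such that $a_{\ell+1}\neq0$, and let $\lambda:=[\ell/2]$. Then the $n/2$ functions $J_1,\dots,J_\lambda,\ H,\ F_{\lambda+1},F_{\lambda+2},\dots,F_{n/2-1}$ are pairwise in involution with respect to $\{\cdot,\cdot\}$ and functionally independent (their differentials are linearly independent on a dense open subset of $\mathbb R^n$). Hence they define a Liouville integrable system on $(\mathbb R^n,\{\cdot,\cdot\})$.
   Context: Let $n\ge1$, $(a_1,\dots,a_n)\in\mathbb R^n\setminus\{0\}$. On $\mathbb R^n$ with coordinates $x_1,\dots,x_n$ consider the Poisson bracket $\{x_i,x_j\}=x_ix_j$ for $1\le i<j\le n$ (extended by skew-symmetry and the Leibniz rule; rational functions are considered on the open dense set where their denominators do not vanish); for $n$ even it has rank $n$. Let $H=a_1x_1+\dots+a_nx_n$, $v_0:=0$ and $v_i:=a_1x_1+\dots+a_ix_i$ for $i=1,\dots,n$. For $k=1,\dots,[n/2]$ let $J_k:=\dfrac{x_1x_3\cdots x_{2k-1}}{x_2x_4\cdots x_{2k}}$. For $n$ even and $k=1,\dots,n/2$ let $F_k:=v_{2k}\dfrac{x_{2k+2}x_{2k+4}\cdots x_n}{x_{2k+1}x_{2k+3}\cdots x_{n-1}}$ (empty product $=1$, so $F_{n/2}=H$). *)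

(* Defs.v *)
From Stdlib Require Import Reals Lra Lia Arith.
Open Scope R_scope.

(* Points of R^n are x : nat -> R; only coordinates x 1, ..., x n matter
   (1-indexed as in the paper). *)

Fixpoint sumto (f : nat -> R) (k : nat) : R :=
  match k with O => 0 | S k' => sumto f k' + f (S k') end.

(* prod_btw g lo hi = product of g i for lo < i <= hi *)
Fixpoint prod_btw (g : nat -> R) (lo hi : nat) : R :=
  match hi with
  | O => 1
  | S h => prod_btw g lo h * (if Nat.ltb lo (S h) then g (S h) else 1)
  end.

Definition v (a : nat -> R) (i : nat) (x : nat -> R) : R :=
  sumto (fun j => a j * x j) i.
Definition Hf (n : nat) (a : nat -> R) (x : nat -> R) : R := v a n x.

Definition J (k : nat) (x : nat -> R) : R :=
  prod_btw (fun i => x (2 * i - 1)%nat) 0 k / prod_btw (fun i => x (2 * i)%nat) 0 k.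

(* For n = 2m: F_k = v_{2k} (x_{2k+2} ... x_n) / (x_{2k+1} ... x_{n-1}) *)
Definition F (m : nat) (a : nat -> R) (k : nat) (x : nat -> R) : R :=
  v a (2 * k) x * prod_btw (fun i => x (2 * i)%nat) k m
    / prod_btw (fun i => x (2 * i - 1)%nat) k m.

(* The family  J_1..J_lam, H, F_{lam+1}..F_{m-1}, indexed by k = 0..m-1 *)
Definition fam (m : nat) (a : nat -> R) (lam k : nat) : (nat -> R) -> R :=
  if Nat.ltb k lam then J (S k)
  else if Nat.eqb k lam then Hf (2 * m) a
  else F m a k.

Definition upd (x : nat -> R) (i : nat) (t : R) : nat -> R :=
  fun j => if Nat.eqb j i then t else x j.

Definition is_grad (n : nat) (f : (nat -> R) -> R) (x : nat -> R) (g : nat -> R) : Prop :=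
  forall i, (1 <= i <= n)%nat -> derivable_pt_lim (fun t => f (upd x i t)) (x i) (g i).

(* Poisson bracket {x_i,x_j} = x_i x_j (i<j):
   {f,g}(x) = sum_{i<j} x_i x_j (d_i f d_j g - d_j f d_i g) *)
Definition bracket (n : nat) (x : nat -> R) (df dg : nat -> R) : R :=
  sumto (fun j => sumto (fun i => x i * x j * (df i * dg j - df j * dg i)) (j - 1)) n.

(* open set where all coordinates are nonzero (all denominators nonzero) *)
Definition torus (n : nat) (x : nat -> R) : Prop :=
  forall i, (1 <= i <= n)%nat -> x i <> 0.

Definition close (n : nat) (eps : R) (x y : nat -> R) : Prop :=
  forall i, (1 <= i <= n)%nat -> Rabs (y i - x i) < eps.

Definition openR (n : nat) (U : (nat -> R) -> Prop) : Prop :=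
  forall x, U x -> exists eps, 0 < eps /\ forall y, close n eps x y -> U y.

Definition denseR (n : nat) (U : (nat -> R) -> Prop) : Prop :=
  forall x eps, 0 < eps -> exists y, U y /\ close n eps x y.

Definition lin_indep (n m : nat) (gs : nat -> nat -> R) : Prop :=
  forall c : nat -> R,
    (forall i, (1 <= i <= n)%nat -> sumto (fun k => c (k - 1)%nat * gs (k - 1)%nat i) m = 0) ->
    forall k, (k < m)%nat -> c k = 0.

(* Main.v *)
Require Import Defs.
From Stdlib Require Import Reals Lra Lia Arith FunctionalExtensionality.
From Coquelicot Require Import Coquelicot.
Require Import Defs.
From Stdlib Require Import Reals Lra Lia Arith.
Open Scope R_scope.

Lemma sumto_S f k : sumto f (S k) = sumto f k + f (S k).
Proof. reflexivity. Qed.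

Lemma sumto_ext f g k : (forall i, (1 <= i <= k)%nat -> f i = g i) -> sumto f k = sumto g k.
Proof.
  induction k; intros H; simpl; auto.
  rewrite IHk by (intros; apply H; lia). rewrite H by lia. auto.
Qed.

Lemma sumto_plus f g k : sumto (fun i => f i + g i) k = sumto f k + sumto g k.
Proof. induction k; simpl; [ring | rewrite IHk; ring]. Qed.
Lemma sumto_scal c f k : sumto (fun i => c * f i) k = c * sumto f k.
Proof. induction k; simpl; [ring | rewrite IHk; ring]. Qed.
Lemma sumto_opp f k : sumto (fun i => - f i) k = - sumto f k.
Proof. induction k; simpl; [ring | rewrite IHk; ring]. Qed.
Lemma sumto_zero k : sumto (fun _ => 0) k = 0.
Proof. induction k; simpl; [ring | rewrite IHk; ring]. Qed.
Lemma sumto_exch (F : nat -> nat -> R) N M :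
  sumto (fun j => sumto (fun k => F j k) M) N = sumto (fun k => sumto (fun j => F j k) N) M.
Proof.
  induction N; simpl. symmetry; apply sumto_zero.
  rewrite IHN, <- sumto_plus. reflexivity.
Qed.

Definition omega n (u w : nat -> R) :=
  sumto (fun j => sumto (fun i => u i * w j - u j * w i) (j - 1)) n.

Lemma bracket_omega n x g h :
  bracket n x g h = omega n (fun i => x i * g i) (fun i => x i * h i).
Proof.
  unfold bracket, omega. apply sumto_ext; intros j _. apply sumto_ext; intros i _. ring.
Qed.

Lemma omega_ext n u w u' w' :
  (forall i, (1 <= i <= n)%nat -> u i = u' i) -> (forall i, (1 <= i <= n)%nat -> w i = w' i) ->
  omega n u w = omega n u' w'.
Proof.
  intros Hu Hw. unfold omega. apply sumto_ext; intros j Hj. apply sumto_ext; intros i Hi.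
  rewrite !Hu, !Hw by lia. auto.
Qed.

Lemma inner_lem n u w c d : sumto (fun i => u i * c - d * w i) n = sumto u n * c - d * sumto w n.
Proof. induction n; simpl; [ring | rewrite IHn; ring]. Qed.

Lemma omega_L1 n u w :
  omega n u w = sumto (fun j => w j * (sumto u (j-1) + sumto u j)) n - sumto u n * sumto w n.
Proof.
  induction n. simpl. unfold omega; simpl; ring.
  unfold omega in *. rewrite !sumto_S, IHn.
  replace (S n - 1)%nat with n by lia. rewrite inner_lem. rewrite ?sumto_S. ring.
Qed.

Lemma omega_antisym n u w : omega n u w = - omega n w u.
Proof.
  unfold omega. rewrite <- sumto_opp. apply sumto_ext; intros j _.
  rewrite <- sumto_opp. apply sumto_ext; intros i _. ring.
Qed.

Lemma omega_scal n c d u w :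
  omega n (fun i => c * u i) (fun i => d * w i) = c * d * omega n u w.
Proof.
  unfold omega. rewrite <- sumto_scal. apply sumto_ext; intros j _.
  rewrite <- sumto_scal. apply sumto_ext; intros i _. ring.
Qed.

Lemma sumto_tail f w c p n : (p <= n)%nat -> (forall j, (p < j <= n)%nat -> f j = c * w j) ->
  sumto f n = sumto f p + c * (sumto w n - sumto w p).
Proof.
  induction n; intros H H0.
  - replace p with 0%nat by lia. simpl; ring.
  - destruct (Nat.eq_dec p (S n)). subst; ring.
    rewrite !sumto_S, IHn by (lia || (intros; apply H0; lia)). rewrite H0 by lia. ring.
Qed.

Lemma omega_tail n u w p c : (p <= n)%nat ->
  (forall j, (p < j <= n)%nat -> sumto u (j-1) + sumto u j = c) -> sumto u n = c ->
  omega n u w = sumto (fun j => w j * (sumto u (j-1) + sumto u j)) p - c * sumto w p.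
Proof.
  intros H H0 H1. rewrite omega_L1, (sumto_tail _ w c p n); auto.
  rewrite H1; ring. intros; rewrite H0; auto; ring.
Qed.

Lemma even_S n : Nat.even (S n) = negb (Nat.even n).
Proof. rewrite Nat.even_succ, <- Nat.negb_even; auto. Qed.
Lemma even_2k k : Nat.even (2*k) = true.
Proof. rewrite Nat.even_mul; auto. Qed.
Lemma even_2k1 k : Nat.even (S (2*k)) = false.
Proof. rewrite even_S, even_2k; auto. Qed.

Lemma v_S a j x : v a (S j) x = v a j x + a (S j) * x (S j).
Proof. reflexivity. Qed.

Definition sJ (k i : nat) : R := if Nat.leb i (2*k) then (if Nat.even i then -1 else 1) else 0.
Definition hv (a x : nat -> R) (i : nat) : R := a i * x i.
Definition fv (a : nat -> R) (k : nat) (x : nat -> R) (i : nat) : R :=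
  if Nat.leb i (2*k) then a i * x i else (if Nat.even i then v a (2*k) x else - v a (2*k) x).

Lemma PJ k p : sumto (sJ k) p = if (Nat.ltb p (2*k) && negb (Nat.even p))%bool then 1 else 0.
Proof.
  induction p. simpl. rewrite Bool.andb_false_r; auto.
  rewrite sumto_S, IHp. unfold sJ. rewrite even_S.
  destruct (lt_eq_lt_dec (S p) (2*k)) as [[Hlt|Heq]|Hgt].
  - destruct (Nat.ltb_spec p (2*k)); try lia. destruct (Nat.ltb_spec (S p) (2*k)); try lia.
    destruct (Nat.leb_spec (S p) (2*k)); try lia.
    destruct (Nat.even p); simpl; ring.
  - assert (He : Nat.even p = false).
    { pose proof (even_2k k) as E. rewrite <- Heq, even_S in E. destruct (Nat.even p); auto. }
    rewrite He. destruct (Nat.ltb_spec p (2*k)); try lia. destruct (Nat.ltb_spec (S p) (2*k)); try lia.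
    destruct (Nat.leb_spec (S p) (2*k)); try lia. simpl; ring.
  - destruct (Nat.ltb_spec p (2*k)); try lia. destruct (Nat.ltb_spec (S p) (2*k)); try lia.
    destruct (Nat.leb_spec (S p) (2*k)); try lia. simpl; ring.
Qed.

Lemma PF a k x p : sumto (fv a k x) p =
  if Nat.leb p (2*k) then v a p x else if Nat.even p then v a (2*k) x else 0.
Proof.
  induction p. simpl. reflexivity.
  rewrite sumto_S, IHp. unfold fv. rewrite even_S, v_S.
  destruct (lt_eq_lt_dec p (2*k)) as [[Hlt|Heq]|Hgt].
  - destruct (Nat.leb_spec p (2*k)); try lia. destruct (Nat.leb_spec (S p) (2*k)); try lia. auto.
  - subst p. rewrite even_2k. destruct (Nat.leb_spec (2*k) (2*k)); try lia.
    destruct (Nat.leb_spec (S (2*k)) (2*k)); try lia. simpl; ring.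
  - destruct (Nat.leb_spec p (2*k)); try lia. destruct (Nat.leb_spec (S p) (2*k)); try lia.
    destruct (Nat.even p); simpl; ring.
Qed.

Lemma omega_sJ n K w : (2*K <= n)%nat -> omega n (sJ K) w = sumto w (2*K).
Proof.
  intros H. rewrite (omega_tail n (sJ K) w (2*K) 0); auto.
  - rewrite Rmult_0_l, Rminus_0_r. apply sumto_ext. intros j Hj.
    destruct j as [|j']; [lia|]. replace (S j' - 1)%nat with j' by lia.
    rewrite !PJ, even_S.
    destruct (Nat.eq_dec (S j') (2*K)) as [Heq|Hne].
    + assert (He : Nat.even j' = false).
      { pose proof (even_2k K) as E. rewrite <- Heq, even_S in E. destruct (Nat.even j'); auto. }
      rewrite He. destruct (Nat.ltb_spec j' (2*K)); try lia. destruct (Nat.ltb_spec (S j') (2*K)); try lia.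
      simpl; ring.
    + destruct (Nat.ltb_spec j' (2*K)); try lia. destruct (Nat.ltb_spec (S j') (2*K)); try lia.
      destruct (Nat.even j'); simpl; ring.
  - intros j Hj. rewrite !PJ. destruct (Nat.ltb_spec (j-1) (2*K)); try lia.
    destruct (Nat.ltb_spec j (2*K)); try lia. simpl; ring.
  - rewrite PJ. destruct (Nat.ltb_spec n (2*K)); try lia. simpl; ring.
Qed.

Lemma omega_fv m a k x w : (k <= m)%nat ->
  omega (2*m) (fv a k x) w =
  sumto (fun j => w j * (v a (j-1) x + v a j x)) (2*k) - v a (2*k) x * sumto w (2*k).
Proof.
  intros H. rewrite (omega_tail (2*m) (fv a k x) w (2*k) (v a (2*k) x)); try lia.
  - f_equal. apply sumto_ext. intros j Hj. rewrite !PF.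
    destruct (Nat.leb_spec (j-1) (2*k)); try lia. destruct (Nat.leb_spec j (2*k)); try lia. auto.
  - intros j Hj. destruct j as [|j']; [lia|]. replace (S j' - 1)%nat with j' by lia.
    rewrite !PF, even_S.
    destruct (Nat.eq_dec j' (2*k)) as [Heq|Hne].
    + subst j'. rewrite even_2k.
      destruct (Nat.leb_spec (2*k) (2*k)); try lia. destruct (Nat.leb_spec (S (2*k)) (2*k)); try lia.
      simpl; ring.
    + destruct (Nat.leb_spec j' (2*k)); try lia. destruct (Nat.leb_spec (S j') (2*k)); try lia.
      destruct (Nat.even j'); simpl; ring.
  - rewrite PF, even_2k. destruct (Nat.leb_spec (2*m) (2*k)); auto.
    replace k with m by lia. auto.
Qed.

Lemma tele a x p : sumto (fun j => a j * x j * (v a (j-1) x + v a j x)) p = v a p x * v a p x.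
Proof.
  induction p. simpl. unfold v; simpl; ring.
  rewrite sumto_S, IHp, v_S. replace (S p - 1)%nat with p by lia. ring.
Qed.

Lemma vzero a x l p : (forall i, (1 <= i <= l)%nat -> a i = 0) -> (p <= l)%nat -> v a p x = 0.
Proof.
  intros H. induction p; intros Hp. reflexivity.
  rewrite v_S, IHp by lia. rewrite H by lia. ring.
Qed.

Definition sh (a : nat -> R) (lam k : nat) (x : nat -> R) : nat -> R :=
  if Nat.ltb k lam then sJ (S k) else if Nat.eqb k lam then hv a x else fv a k x.

Lemma omega_FF m a x k k' : (k <= k')%nat -> (k' <= m)%nat ->
  omega (2*m) (fv a k x) (fv a k' x) = 0.
Proof.
  intros H1 H2. rewrite omega_fv by lia. rewrite PF.
  destruct (Nat.leb_spec (2*k) (2*k')); try lia.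
  rewrite (sumto_ext _ (fun j => a j * x j * (v a (j-1) x + v a j x))).
  rewrite tele; ring.
  intros j Hj. unfold fv. destruct (Nat.leb_spec j (2*k')); try lia. auto.
Qed.

Lemma omega_FH m a x k : (k <= m)%nat -> omega (2*m) (fv a k x) (hv a x) = 0.
Proof.
  intros H1. rewrite omega_fv by lia.
  change (sumto (hv a x) (2*k)) with (v a (2*k) x).
  unfold hv. rewrite tele; ring.
Qed.

Lemma omega_pair m a x l lam k1 k2 :
  (forall i, (1 <= i <= l)%nat -> a i = 0) -> (2*lam <= l)%nat -> (lam < m)%nat ->
  (k1 < m)%nat -> (k2 < m)%nat ->
  omega (2*m) (sh a lam k1 x) (sh a lam k2 x) = 0.
Proof.
  intros Hz Hl Hlm.
  assert (Hself : forall u, omega (2*m) u u = 0).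
  { intros u. pose proof (omega_antisym (2*m) u u). lra. }
  assert (Hmain : forall k1 k2, (k1 <= k2)%nat -> (k2 < m)%nat ->
           omega (2*m) (sh a lam k1 x) (sh a lam k2 x) = 0).
  { clear k1 k2. intros k1 k2 H12 H2. unfold sh.
    destruct (Nat.ltb_spec k1 lam).
    - rewrite omega_sJ by lia.
      destruct (Nat.ltb_spec k2 lam).
      + rewrite PJ, even_2k. destruct (Nat.ltb (2 * S k1) (2 * S k2)); simpl; auto.
      + destruct (Nat.eqb_spec k2 lam).
        * change (sumto (hv a x) (2 * S k1)) with (v a (2 * S k1) x). apply (vzero a x l); auto; lia.
        * rewrite PF. destruct (Nat.leb_spec (2 * S k1) (2*k2)); try lia. apply (vzero a x l); auto; lia.
    - destruct (Nat.ltb_spec k2 lam); try lia.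
      destruct (Nat.eqb_spec k1 lam); destruct (Nat.eqb_spec k2 lam).
      + apply Hself.
      + rewrite omega_antisym, omega_FH by lia. ring.
      + lia.
      + apply omega_FF; lia. }
  intros H1 H2. destruct (Nat.le_gt_cases k1 k2).
  - apply Hmain; auto.
  - rewrite omega_antisym, Hmain by lia. ring.
Qed.

Lemma key_deriv (phi : R -> R) p q C (a b : nat) x0 :
 x0 <> 0 -> (forall t, phi t = (p + q*t) * C * t^a / t^b) ->
 exists L, derivable_pt_lim phi x0 L /\ x0 * L = q * x0 * (C * x0^a / x0^b) + (INR a - INR b) * phi x0.
Proof.
  intros Hx Hphi.
  assert (E : phi = fun t => (p + q*t) * C * t^a / t^b) by (apply functional_extensionality; auto).
  subst phi.
  eexists; split.
  - apply is_derive_Reals. auto_derive.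
    + apply pow_nonzero; auto.
    + reflexivity.
  - assert (x0 ^ b <> 0) by (apply pow_nonzero; auto).
    destruct a as [|a]; destruct b as [|b]; simpl pred; rewrite ?S_INR; simpl INR; simpl pow; field;
      try (split; [apply pow_nonzero|]; auto).
Qed.

Fixpoint cnt (h : nat -> nat) (i lo hi : nat) : nat :=
  match hi with
  | O => O
  | S hh => (cnt h i lo hh + (if (Nat.ltb lo (S hh) && Nat.eqb (h (S hh)) i)%bool then 1 else 0))%nat
  end.

Lemma cnt_S h i lo hi : cnt h i lo (S hi) =
  (cnt h i lo hi + (if (Nat.ltb lo (S hi) && Nat.eqb (h (S hi)) i)%bool then 1 else 0))%nat.
Proof. reflexivity. Qed.

Lemma prod_S g lo h : prod_btw g lo (S h) = prod_btw g lo h * (if Nat.ltb lo (S h) then g (S h) else 1).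
Proof. reflexivity. Qed.

Lemma prod_upd x i t h lo hi :
  prod_btw (fun j => upd x i t (h j)) lo hi = prod_btw (fun j => upd x i 1 (h j)) lo hi * t ^ cnt h i lo hi.
Proof.
  induction hi. simpl; ring.
  rewrite !prod_S, cnt_S, IHhi, pow_add. unfold upd.
  destruct (Nat.ltb lo (S hi)); destruct (Nat.eqb (h (S hi)) i); simpl; ring.
Qed.

Lemma parity i : (Nat.even i = true /\ exists q, i = (2*q)%nat) \/ (Nat.even i = false /\ exists q, i = S (2*q)).
Proof.
  destruct (Nat.Even_or_Odd i) as [[q Hq]|[q Hq]].
  - left. subst. split; [apply even_2k | eauto].
  - right. rewrite Nat.add_1_r in Hq. subst. split; [apply even_2k1 | eauto].
Qed.

Lemma cnt_even i lo hi : cnt (fun j => 2*j)%nat i lo hi =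
  if (Nat.even i && Nat.ltb (2*lo) i && Nat.leb i (2*hi))%bool then 1%nat else 0%nat.
Proof.
  destruct (parity i) as [[He [q Hq]]|[He [q Hq]]]; rewrite He; cbn [andb negb].
  - induction hi.
    + cbn [cnt]. destruct (Nat.ltb_spec (2*lo) i); destruct (Nat.leb_spec i (2*0)); simpl; lia.
    + rewrite cnt_S, IHhi.
      destruct (Nat.ltb_spec (2*lo) i); destruct (Nat.leb_spec i (2*hi)); destruct (Nat.leb_spec i (2*S hi));
      destruct (Nat.ltb_spec lo (S hi)); destruct (Nat.eqb_spec (2 * S hi) i); simpl; lia.
  - induction hi.
    + reflexivity.
    + rewrite cnt_S, IHhi.
      destruct (Nat.ltb_spec lo (S hi)); destruct (Nat.eqb_spec (2 * S hi) i); simpl; lia.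
Qed.

Lemma cnt_odd i lo hi : cnt (fun j => 2*j-1)%nat i lo hi =
  if (negb (Nat.even i) && Nat.ltb (2*lo) i && Nat.leb i (2*hi))%bool then 1%nat else 0%nat.
Proof.
  destruct (parity i) as [[He [q Hq]]|[He [q Hq]]]; rewrite He; cbn [andb negb].
  - induction hi.
    + reflexivity.
    + rewrite cnt_S, IHhi.
      destruct (Nat.ltb_spec lo (S hi)); destruct (Nat.eqb_spec (2 * S hi - 1) i); simpl; lia.
  - induction hi.
    + cbn [cnt]. destruct (Nat.ltb_spec (2*lo) i); destruct (Nat.leb_spec i (2*0)); simpl; lia.
    + rewrite cnt_S, IHhi.
      destruct (Nat.ltb_spec (2*lo) i); destruct (Nat.leb_spec i (2*hi)); destruct (Nat.leb_spec i (2*S hi));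
      destruct (Nat.ltb_spec lo (S hi)); destruct (Nat.eqb_spec (2 * S hi - 1) i); simpl; lia.
Qed.

Lemma v_upd a j x i t : (1 <= i)%nat ->
  v a j (upd x i t) = v a j (upd x i 0) + (if Nat.leb i j then a i * t else 0).
Proof.
  intros Hi. induction j.
  - destruct (Nat.leb_spec i 0); try lia. unfold v; simpl; ring.
  - rewrite !v_S, IHj. unfold upd at 2 4.
    destruct (Nat.eqb_spec (S j) i); destruct (Nat.leb_spec i j); destruct (Nat.leb_spec i (S j));
      try lia; subst; ring.
Qed.

Lemma upd_same x i : upd x i (x i) = x.
Proof.
  apply functional_extensionality; intros j. unfold upd.
  destruct (Nat.eqb_spec j i); subst; auto.
Qed.

Lemma DJ K x i : (1 <= i)%nat -> x i <> 0 ->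
  exists L, derivable_pt_lim (fun t => J K (upd x i t)) (x i) L /\ x i * L = J K x * sJ K i.
Proof.
  intros Hi Hx.
  destruct (key_deriv (fun t => J K (upd x i t)) 1 0
     (prod_btw (fun j => upd x i 1 (2*j-1)%nat) 0 K / prod_btw (fun j => upd x i 1 (2*j)%nat) 0 K)
     (cnt (fun j => 2*j-1)%nat i 0 K) (cnt (fun j => 2*j)%nat i 0 K) (x i)) as [L [HL HL2]]; auto.
  { intros t. unfold J. rewrite (prod_upd x i t (fun j => 2*j-1)%nat), (prod_upd x i t (fun j => 2*j)%nat).
    unfold Rdiv. rewrite !Rinv_mult. ring. }
  exists L; split; auto. rewrite HL2, upd_same, cnt_odd, cnt_even. unfold sJ.
  destruct (Nat.ltb_spec (2*0) i); try lia.
  destruct (parity i) as [[He _]|[He _]]; rewrite He; cbn [andb negb];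
  destruct (Nat.leb_spec i (2*K)); simpl INR; ring.
Qed.

Lemma DH m a x i : (1 <= i <= 2*m)%nat -> x i <> 0 ->
  exists L, derivable_pt_lim (fun t => Hf (2*m) a (upd x i t)) (x i) L /\ x i * L = 1 * hv a x i.
Proof.
  intros Hi Hx.
  destruct (key_deriv (fun t => Hf (2*m) a (upd x i t)) (v a (2*m) (upd x i 0)) (a i) 1 0 0 (x i))
    as [L [HL HL2]]; auto.
  { intros t. unfold Hf. rewrite v_upd by lia. destruct (Nat.leb_spec i (2*m)); try lia.
    simpl. field. }
  exists L; split; auto. rewrite HL2. unfold hv. simpl. field.
Qed.

Definition Mw (m k : nat) (x : nat -> R) : R :=
  prod_btw (fun j => x (2*j)%nat) k m / prod_btw (fun j => x (2*j-1)%nat) k m.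

Lemma DF m a k x i : (1 <= i <= 2*m)%nat -> x i <> 0 ->
  exists L, derivable_pt_lim (fun t => F m a k (upd x i t)) (x i) L /\ x i * L = Mw m k x * fv a k x i.
Proof.
  intros Hi Hx.
  set (C := prod_btw (fun j => upd x i 1 (2*j)%nat) k m / prod_btw (fun j => upd x i 1 (2*j-1)%nat) k m).
  destruct (key_deriv (fun t => F m a k (upd x i t)) (v a (2*k) (upd x i 0))
     (if Nat.leb i (2*k) then a i else 0) C
     (cnt (fun j => 2*j)%nat i k m) (cnt (fun j => 2*j-1)%nat i k m) (x i)) as [L [HL HL2]]; auto.
  { intros t. unfold F. rewrite v_upd by lia.
    rewrite (prod_upd x i t (fun j => 2*j-1)%nat), (prod_upd x i t (fun j => 2*j)%nat).
    unfold C, Rdiv. rewrite !Rinv_mult. destruct (Nat.leb i (2*k)); ring. }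
  assert (HM : Mw m k (upd x i (x i)) = C * x i ^ (cnt (fun j => 2*j)%nat i k m) / x i ^ (cnt (fun j => 2*j-1)%nat i k m)).
  { unfold Mw. rewrite (prod_upd x i (x i) (fun j => 2*j-1)%nat), (prod_upd x i (x i) (fun j => 2*j)%nat).
    unfold C, Rdiv. rewrite !Rinv_mult. ring. }
  rewrite upd_same in HM.
  assert (HFx : F m a k x = v a (2*k) x * Mw m k x) by (unfold F, Mw, Rdiv; ring).
  exists L; split; auto. rewrite HL2, upd_same, HFx, <- HM.
  unfold fv. rewrite cnt_odd, cnt_even.
  destruct (Nat.leb_spec i (2*m)); try lia.
  destruct (Nat.leb_spec i (2*k)); destruct (Nat.ltb_spec (2*k) i); try lia;
  destruct (parity i) as [[He _]|[He _]]; rewrite He; cbn [andb negb]; simpl INR; ring.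
Qed.

Definition wt (m lam k : nat) (x : nat -> R) : R :=
  if Nat.ltb k lam then J (S k) x else if Nat.eqb k lam then 1 else Mw m k x.

Lemma fam_deriv m a lam k x i : (1 <= i <= 2*m)%nat -> x i <> 0 ->
  exists L, derivable_pt_lim (fun t => fam m a lam k (upd x i t)) (x i) L /\
            x i * L = wt m lam k x * sh a lam k x i.
Proof.
  intros Hi Hx. unfold fam, wt, sh.
  destruct (Nat.ltb k lam). apply DJ; auto; lia.
  destruct (Nat.eqb k lam). apply DH; auto. apply DF; auto.
Qed.

Lemma grad_exists m a lam k x : torus (2*m) x ->
  exists g, is_grad (2*m) (fam m a lam k) x g.
Proof.
  intros Ht. exists (fun i => wt m lam k x * sh a lam k x i / x i).
  intros i Hi. destruct (fam_deriv m a lam k x i Hi (Ht i Hi)) as [L [HL HL2]].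
  replace (wt m lam k x * sh a lam k x i / x i) with L; auto.
  rewrite <- HL2. field. apply Ht; auto.
Qed.

Lemma grad_eq m a lam k x g : torus (2*m) x -> is_grad (2*m) (fam m a lam k) x g ->
  forall i, (1 <= i <= 2*m)%nat -> x i * g i = wt m lam k x * sh a lam k x i.
Proof.
  intros Ht Hg i Hi. destruct (fam_deriv m a lam k x i Hi (Ht i Hi)) as [L [HL HL2]].
  rewrite (uniqueness_limite _ _ _ _ (Hg i Hi) HL). auto.
Qed.

Lemma involution m a l lam k1 k2 x g1 g2 :
  (forall i, (1 <= i <= l)%nat -> a i = 0) -> (2*lam <= l)%nat -> (lam < m)%nat ->
  (k1 < m)%nat -> (k2 < m)%nat -> torus (2*m) x ->
  is_grad (2*m) (fam m a lam k1) x g1 -> is_grad (2*m) (fam m a lam k2) x g2 ->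
  bracket (2*m) x g1 g2 = 0.
Proof.
  intros Hz Hl Hlm H1 H2 Ht G1 G2. rewrite bracket_omega.
  rewrite (omega_ext _ _ _ (fun i => wt m lam k1 x * sh a lam k1 x i) (fun i => wt m lam k2 x * sh a lam k2 x i)).
  rewrite omega_scal, (omega_pair m a x l lam k1 k2); auto; ring.
  intros; eapply grad_eq; eauto. intros; eapply grad_eq; eauto.
Qed.

Lemma prod_nz g lo hi : (forall j, (lo < j <= hi)%nat -> g j <> 0) -> prod_btw g lo hi <> 0.
Proof.
  induction hi; intros H. simpl; lra.
  rewrite prod_S. apply Rmult_integral_contrapositive_currified.
  apply IHhi; intros; apply H; lia.
  destruct (Nat.ltb_spec lo (S hi)). apply H; lia. lra.
Qed.

Lemma wt_nz m lam k x : torus (2*m) x -> (lam < m)%nat -> (k < m)%nat -> wt m lam k x <> 0.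
Proof.
  intros Ht Hlm Hk. unfold wt.
  destruct (Nat.ltb_spec k lam).
  - unfold J, Rdiv. apply Rmult_integral_contrapositive_currified.
    apply prod_nz; intros; apply Ht; lia.
    apply Rinv_neq_0_compat, prod_nz; intros; apply Ht; lia.
  - destruct (Nat.eqb k lam). lra.
    unfold Mw, Rdiv. apply Rmult_integral_contrapositive_currified.
    apply prod_nz; intros; apply Ht; lia.
    apply Rinv_neq_0_compat, prod_nz; intros; apply Ht; lia.
Qed.

Lemma pref_E1 a x l lam k j : (forall i, (1 <= i <= l)%nat -> a i = 0) -> (2*lam <= l)%nat -> (j < lam)%nat ->
  sumto (sh a lam k x) (S (2*j)) = if (Nat.ltb k lam && Nat.leb j k)%bool then 1 else 0.
Proof.
  intros Hz Hl Hj. unfold sh.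
  destruct (Nat.ltb_spec k lam).
  - rewrite PJ, even_2k1. cbn [andb negb]. rewrite Bool.andb_true_r.
    destruct (Nat.ltb_spec (S (2*j)) (2 * S k)); destruct (Nat.leb_spec j k); auto; lia.
  - cbn [andb]. destruct (Nat.eqb k lam).
    + change (sumto (hv a x) (S (2*j))) with (v a (S (2*j)) x). apply (vzero a x l); auto; lia.
    + rewrite PF. destruct (Nat.leb_spec (S (2*j)) (2*k)); try lia. apply (vzero a x l); auto; lia.
Qed.

Definition pp (lam q : nat) : nat := if Nat.eqb q lam then (2*lam+2)%nat else S (2*q).

Lemma pref_E2 a x lam k q : (lam <= q)%nat ->
  sumto (sh a lam k x) (pp lam q) = if (Nat.eqb k lam || Nat.ltb q k)%bool then v a (pp lam q) x else 0.
Proof.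
  intros Hq. unfold sh, pp.
  destruct (Nat.eqb_spec q lam).
  - subst q. destruct (Nat.ltb_spec k lam).
    + rewrite PJ. destruct (Nat.ltb_spec (2*lam+2) (2 * S k)); try lia.
      destruct (Nat.eqb_spec k lam); try lia. destruct (Nat.ltb_spec lam k); try lia. reflexivity.
    + destruct (Nat.eqb_spec k lam). reflexivity.
      rewrite PF. destruct (Nat.leb_spec (2*lam+2) (2*k)); try lia.
      destruct (Nat.ltb_spec lam k); try lia. reflexivity.
  - destruct (Nat.ltb_spec k lam).
    + rewrite PJ. destruct (Nat.ltb_spec (S (2*q)) (2 * S k)); try lia.
      destruct (Nat.eqb_spec k lam); try lia. destruct (Nat.ltb_spec q k); try lia. reflexivity.
    + destruct (Nat.eqb_spec k lam). reflexivity.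
      rewrite PF, even_2k1. destruct (Nat.leb_spec (S (2*q)) (2*k)); destruct (Nat.ltb_spec q k); try lia;
      reflexivity.
Qed.

Definition Sb (d : nat -> R) (b : nat -> bool) (m : nat) : R :=
  sumto (fun k => if b (k-1)%nat then d (k-1)%nat else 0) m.

Lemma Sb_diff d b1 b2 j m : (j < m)%nat ->
  (forall k, (k < m)%nat -> b1 k = (b2 k || Nat.eqb k j)%bool) ->
  (forall k, (k < m)%nat -> b2 k = true -> k <> j) ->
  Sb d b1 m = Sb d b2 m + d j.
Proof.
  unfold Sb. induction m; intros Hj H1 H2. lia.
  rewrite !sumto_S. replace (S m - 1)%nat with m by lia.
  destruct (Nat.eq_dec j m).
  - subst j. rewrite (sumto_ext _ (fun k => if b2 (k-1)%nat then d (k-1)%nat else 0)).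
    rewrite H1 by lia. rewrite Nat.eqb_refl, Bool.orb_true_r.
    destruct (b2 m) eqn:E. exfalso; apply (H2 m); auto. ring.
    intros k Hk. rewrite H1 by lia. destruct (Nat.eqb_spec (k-1) m); try lia. rewrite Bool.orb_false_r. auto.
  - rewrite IHm by (auto; lia). rewrite H1 by lia. destruct (Nat.eqb_spec m j); try lia.
    rewrite Bool.orb_false_r. ring.
Qed.

Lemma Sb_zero d b m : (forall k, (k < m)%nat -> b k = false) -> Sb d b m = 0.
Proof.
  intros H. unfold Sb. rewrite (sumto_ext _ (fun _ => 0)). apply sumto_zero.
  intros k Hk. rewrite H by lia. auto.
Qed.

Ltac bsolve := repeat match goal with
  | |- context [Nat.ltb ?a ?b] => destruct (Nat.ltb_spec a b)
  | |- context [Nat.leb ?a ?b] => destruct (Nat.leb_spec a b)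
  | |- context [Nat.eqb ?a ?b] => destruct (Nat.eqb_spec a b)
  end; simpl; try reflexivity; try (intros; discriminate); try (intros; lia); try (exfalso; lia).

Lemma lin_main m a l lam x gs c :
  (forall i, (1 <= i <= l)%nat -> a i = 0) -> (2*lam <= l)%nat -> (lam < m)%nat -> torus (2*m) x ->
  (forall q, (lam <= q < m)%nat -> v a (pp lam q) x <> 0) ->
  (forall k, (k < m)%nat -> is_grad (2*m) (fam m a lam k) x (gs k)) ->
  (forall i, (1 <= i <= 2*m)%nat -> sumto (fun k => c (k-1)%nat * gs (k-1)%nat i) m = 0) ->
  forall k, (k < m)%nat -> c k = 0.
Proof.
  intros Hz Hl Hlm Ht Hv Hg Hc.
  set (d := fun k => c k * wt m lam k x).
  assert (Hpre : forall p, (p <= 2*m)%nat -> sumto (fun k => d (k-1)%nat * sumto (sh a lam (k-1)%nat x) p) m = 0).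
  { intros p Hp.
    transitivity (sumto (fun i => x i * sumto (fun k => c (k-1)%nat * gs (k-1)%nat i) m) p).
    - rewrite (sumto_ext (fun i => x i * sumto (fun k => c (k-1)%nat * gs (k-1)%nat i) m)
                 (fun i => sumto (fun k => c (k-1)%nat * wt m lam (k-1) x * sh a lam (k-1) x i) m)).
      + rewrite sumto_exch. apply sumto_ext. intros k Hk. unfold d. rewrite <- sumto_scal.
        apply sumto_ext; intros; ring.
      + intros i Hi. rewrite <- sumto_scal. apply sumto_ext. intros k Hk.
        transitivity (c (k-1)%nat * (x i * gs (k-1)%nat i)). ring.
        rewrite (grad_eq m a lam (k-1) x (gs (k-1)%nat)); auto; try lia. ring. apply Hg; lia.
    - rewrite (sumto_ext _ (fun _ => 0)). apply sumto_zero. intros i Hi. rewrite Hc by lia. ring. }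
  assert (E1 : forall j, (j < lam)%nat -> Sb d (fun k => Nat.ltb k lam && Nat.leb j k)%bool m = 0).
  { intros j Hj. rewrite <- (Hpre (S (2*j))) by lia. unfold Sb. apply sumto_ext; intros k Hk.
    rewrite (pref_E1 a x l); auto. destruct (Nat.ltb (k-1) lam && Nat.leb j (k-1))%bool; ring. }
  assert (E2 : forall q, (lam <= q < m)%nat -> Sb d (fun k => Nat.eqb k lam || Nat.ltb q k)%bool m = 0).
  { intros q Hq.
    assert (Hpq : (pp lam q <= 2*m)%nat) by (unfold pp; destruct (Nat.eqb q lam); lia).
    assert (H : v a (pp lam q) x * Sb d (fun k => Nat.eqb k lam || Nat.ltb q k)%bool m = 0).
    { rewrite <- (Hpre _ Hpq). unfold Sb. rewrite <- sumto_scal. apply sumto_ext; intros k Hk.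
      rewrite pref_E2 by lia. destruct (Nat.eqb (k-1) lam || Nat.ltb q (k-1))%bool; ring. }
    apply Rmult_integral in H. destruct H as [H|H]; auto. exfalso; apply (Hv q); auto. }
  assert (Dz : forall k, (k < m)%nat -> d k = 0).
  { intros k Hk.
    destruct (lt_eq_lt_dec k lam) as [[Hlt|Heq]|Hgt].
    - pose proof (E1 k Hlt) as A.
      rewrite (Sb_diff d _ (fun k' => Nat.ltb k' lam && Nat.leb (S k) k')%bool k m) in A;
        [ | lia | intros ? ?; bsolve | intros ? ?; bsolve ].
      assert (B : Sb d (fun k' => Nat.ltb k' lam && Nat.leb (S k) k')%bool m = 0).
      { destruct (Nat.eq_dec (S k) lam). apply Sb_zero. intros k' Hk'. bsolve. apply E1; lia. }
      lra.
    - rewrite Heq. pose proof (E2 (m-1)%nat ltac:(lia)) as A.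
      rewrite (Sb_diff d _ (fun _ => false) lam m) in A;
        [ | lia | intros ? ?; bsolve | intros ? ?; bsolve ].
      rewrite Sb_zero in A; auto. lra.
    - pose proof (E2 (k-1)%nat ltac:(lia)) as A.
      rewrite (Sb_diff d _ (fun k' => Nat.eqb k' lam || Nat.ltb k k')%bool k m) in A;
        [ | lia | intros ? ?; bsolve | intros ? ?; bsolve ].
      rewrite E2 in A by lia. lra. }
  intros k Hk. pose proof (Dz k Hk) as D. unfold d in D.
  apply Rmult_integral in D. destruct D as [D|D]; auto.
  exfalso. apply (wt_nz m lam k x); auto.
Qed.

Definition Uset (m : nat) (a : nat -> R) (lam : nat) (x : nat -> R) : Prop :=
  exists dd, 0 < dd /\ (forall i, (1 <= i <= 2*m)%nat -> dd < Rabs (x i)) /\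
    (forall q, (lam <= q < m)%nat -> dd < Rabs (v a (pp lam q) x)).

Lemma sumto_abs_nonneg a p : 0 <= sumto (fun i => Rabs (a i)) p.
Proof. induction p; simpl. lra. pose proof (Rabs_pos (a (S p))). lra. Qed.

Lemma sumto_abs_mono a p n : (p <= n)%nat -> sumto (fun i => Rabs (a i)) p <= sumto (fun i => Rabs (a i)) n.
Proof.
  induction n; intros H. replace p with 0%nat by lia. lra.
  destruct (Nat.eq_dec p (S n)). subst; lra.
  rewrite sumto_S. pose proof (Rabs_pos (a (S n))). pose proof (IHn ltac:(lia)). lra.
Qed.

Lemma v_lip n a eps x y p : close n eps x y -> (p <= n)%nat ->
  Rabs (v a p y - v a p x) <= sumto (fun i => Rabs (a i)) p * eps.
Proof.
  intros Hc. induction p; intros Hp.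
  - unfold v; simpl. rewrite Rminus_0_r, Rabs_R0. lra.
  - rewrite !v_S, sumto_S.
    replace (v a p y + a (S p) * y (S p) - (v a p x + a (S p) * x (S p)))
      with ((v a p y - v a p x) + a (S p) * (y (S p) - x (S p))) by ring.
    eapply Rle_trans. apply Rabs_triang. rewrite Rabs_mult.
    pose proof (IHp ltac:(lia)). pose proof (Hc (S p) ltac:(lia)).
    pose proof (Rabs_pos (a (S p))).
    assert (Rabs (a (S p)) * Rabs (y (S p) - x (S p)) <= Rabs (a (S p)) * eps).
    { apply Rmult_le_compat_l; lra. }
    lra.
Qed.

Lemma U_open m a lam : openR (2*m) (Uset m a lam).
Proof.
  intros x [dd [Hdd [H1 H2]]].
  set (A := 1 + sumto (fun i => Rabs (a i)) (2*m)).
  assert (HA : 1 <= A) by (pose proof (sumto_abs_nonneg a (2*m)); unfold A; lra).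
  exists (dd / (2 * A)). split. apply Rdiv_lt_0_compat; lra.
  intros y Hc. exists (dd/2). split. lra.
  assert (He : dd / (2 * A) * (2 * A) = dd) by (field; lra).
  assert (He2 : dd / (2*A) <= dd / 2).
  { apply Rmult_le_compat_l; [lra|]. apply Rinv_le_contravar; lra. }
  split.
  - intros i Hi. pose proof (H1 i Hi). pose proof (Hc i Hi).
    pose proof (Rabs_triang_inv (x i) (x i - y i)). replace (x i - (x i - y i)) with (y i) in H3 by ring.
    rewrite <- Rabs_Ropp in H0. replace (- (y i - x i)) with (x i - y i) in H0 by ring. lra.
  - intros q Hq. pose proof (H2 q Hq).
    assert (Hpq : (pp lam q <= 2*m)%nat) by (unfold pp; destruct (Nat.eqb q lam); lia).
    pose proof (v_lip (2*m) a (dd/(2*A)) x y _ Hc Hpq).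
    pose proof (sumto_abs_mono a _ _ Hpq).
    pose proof (Rabs_triang_inv (v a (pp lam q) x) (v a (pp lam q) x - v a (pp lam q) y)).
    replace (v a (pp lam q) x - (v a (pp lam q) x - v a (pp lam q) y)) with (v a (pp lam q) y) in H4 by ring.
    rewrite <- Rabs_Ropp in H0. replace (- (v a (pp lam q) y - v a (pp lam q) x)) with (v a (pp lam q) x - v a (pp lam q) y) in H0 by ring.
    assert (sumto (fun i => Rabs (a i)) (pp lam q) * (dd / (2*A)) <= (A - 1) * (dd/(2*A))).
    { apply Rmult_le_compat_r. apply Rlt_le, Rdiv_lt_0_compat; lra. unfold A; lra. }
    nra.
Qed.

Lemma fmin (f : nat -> R) N : (forall k, (k < N)%nat -> f k <> 0) ->
  exists dd, 0 < dd /\ forall k, (k < N)%nat -> dd < Rabs (f k).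
Proof.
  induction N; intros H.
  - exists 1. split. lra. intros; lia.
  - destruct IHN as [dd [Hd Hk]]; [intros k0 Hk0; apply H; lia|].
    assert (HN : 0 < Rabs (f N)) by (apply Rabs_pos_lt; apply H; lia).
    exists (Rmin dd (Rabs (f N) / 2)). split. apply Rmin_pos; lra.
    intros k Hk'. destruct (Nat.eq_dec k N).
    + subst. pose proof (Rmin_r dd (Rabs (f N) / 2)). lra.
    + pose proof (Rmin_l dd (Rabs (f N) / 2)). pose proof (Hk k ltac:(lia)). lra.
Qed.

Lemma avoid (b : nat -> R) N p q : p < q -> exists t, p < t < q /\ forall k, (k < N)%nat -> t <> b k.
Proof.
  intros Hpq.
  assert (S : exists p' q', p <= p' < q' /\ q' <= q /\
            forall k, (k < N)%nat -> forall t, p' < t < q' -> t <> b k).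
  { induction N.
    - exists p, q. repeat split; try lra. intros; lia.
    - destruct IHN as [p' [q' [H1 [H2 H3]]]].
      destruct (Rle_dec (b N) p').
      + exists p', q'. repeat split; try lra. intros k Hk t Ht. destruct (Nat.eq_dec k N).
        subst; lra. apply H3; auto; lia.
      + exists p', (Rmin q' (b N)). pose proof (Rmin_l q' (b N)). pose proof (Rmin_r q' (b N)).
        assert (p' < Rmin q' (b N)) by (apply Rmin_glb_lt; lra).
        repeat split; try lra. intros k Hk t Ht. destruct (Nat.eq_dec k N).
        subst; lra. apply H3; [lia|lra]. }
  destruct S as [p' [q' [H1 [H2 H3]]]].
  exists ((p' + q') / 2). split. lra. intros k Hk. apply H3; auto. lra.
Qed.

Lemma U_dense m a l lam : a (S l) <> 0 -> (l <= 2*lam+1)%nat -> (lam < m)%nat ->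
  denseR (2*m) (Uset m a lam).
Proof.
  intros Ha Hl Hlm x eps Heps.
  set (y0 := fun i => if Req_EM_T (x i) 0 then eps/2 else x i).
  assert (Hy0 : forall i, y0 i <> 0 /\ Rabs (y0 i - x i) < eps).
  { intros i. unfold y0. destruct (Req_EM_T (x i) 0).
    - split. lra. rewrite e. replace (eps/2 - 0) with (eps/2) by ring. rewrite Rabs_pos_eq; lra.
    - split. auto. replace (x i - x i) with 0 by ring. rewrite Rabs_R0. lra. }
  set (b := fun k => match k with O => 0 | S q => - v a (pp lam q) (upd y0 (S l) 0) / a (S l) end).
  destruct (avoid b (S m) (x (S l) - eps) (x (S l) + eps)) as [t [Ht Hb]]. lra.
  set (y := upd y0 (S l) t).
  assert (Hyn : forall i, y i <> 0).
  { intros i. unfold y, upd. destruct (Nat.eqb i (S l)). intro E. apply (Hb 0%nat); auto; lia. apply Hy0. }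
  assert (Hvn : forall q, (lam <= q < m)%nat -> v a (pp lam q) y <> 0).
  { intros q Hq. unfold y. rewrite v_upd by lia.
    destruct (Nat.leb_spec (S l) (pp lam q)).
    - intro E. apply (Hb (S q)); [lia|]. simpl.
      assert (EV : v a (pp lam q) (upd y0 (S l) 0) = - (a (S l) * t)) by lra.
      rewrite EV. field. auto.
    - exfalso. unfold pp in *. destruct (Nat.eqb_spec q lam); lia. }
  destruct (fmin (fun k => y (S k)) (2*m)) as [d1 [Hd1 Hk1]]. intros; auto.
  destruct (fmin (fun q => if Nat.ltb q lam then 1 else v a (pp lam q) y) m) as [d2 [Hd2 Hk2]].
  { intros q Hq. destruct (Nat.ltb_spec q lam). lra. apply Hvn; lia. }
  exists y. split.
  - exists (Rmin d1 d2). pose proof (Rmin_l d1 d2). pose proof (Rmin_r d1 d2).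
    split. apply Rmin_pos; auto. split.
    + intros i Hi. pose proof (Hk1 (i-1)%nat ltac:(lia)). simpl in H1. replace (S (i-1)) with i in H1 by lia. lra.
    + intros q Hq. pose proof (Hk2 q ltac:(lia)). simpl in H1. destruct (Nat.ltb_spec q lam); try lia. lra.
  - intros i Hi. unfold y, upd. destruct (Nat.eqb_spec i (S l)).
    + subst. apply Rabs_def1; lra.
    + apply Hy0.
Qed.

Theorem theorem2p3 (m : nat) (a : nat -> R) (l : nat) :
  (1 <= m)%nat ->
  (l < 2 * m)%nat ->
  a (S l) <> 0 ->
  (forall i, (1 <= i <= l)%nat -> a i = 0) ->
  let n := (2 * m)%nat in
  let lam := Nat.div l 2 in
  (* each function is differentiable (partials exist) on the torus *)
  (forall k, (k < m)%nat -> forall x, torus n x ->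
      exists g, is_grad n (fam m a lam k) x g) /\
  (* pairwise in involution *)
  (forall k1 k2, (k1 < m)%nat -> (k2 < m)%nat -> forall x, torus n x ->
      forall g1 g2, is_grad n (fam m a lam k1) x g1 -> is_grad n (fam m a lam k2) x g2 ->
      bracket n x g1 g2 = 0) /\
  (* functionally independent on a dense open subset *)
  (exists U : (nat -> R) -> Prop,
      openR n U /\ denseR n U /\ (forall x, U x -> torus n x) /\
      forall x, U x -> forall gs : nat -> nat -> R,
        (forall k, (k < m)%nat -> is_grad n (fam m a lam k) x (gs k)) ->
        lin_indep n m gs).
Proof.
  intros Hm Hl Ha Hz. cbv zeta.
  assert (L1 : (2 * (l/2) <= l)%nat /\ (l <= 2 * (l/2) + 1)%nat).
  { pose proof (Nat.div_mod l 2 ltac:(lia)). pose proof (Nat.mod_upper_bound l 2 ltac:(lia)). lia. }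
  remember (l/2)%nat as lam eqn:Elam. clear Elam. destruct L1 as [L1 L2].
  assert (Hlm : (lam < m)%nat) by lia.
  split; [|split].
  - intros k Hk x Ht. apply grad_exists; auto.
  - intros k1 k2 H1 H2 x Ht g1 g2 G1 G2. apply (involution m a l lam k1 k2 x g1 g2); auto.
  - exists (Uset m a lam). split; [|split; [|split]].
    + apply U_open.
    + apply (U_dense m a l lam); auto.
    + intros x [dd [Hd [H1 H2]]] i Hi E. pose proof (H1 i Hi). rewrite E, Rabs_R0 in H. lra.
    + intros x Hx gs Hgs c Hc k Hk.
      assert (Ht : torus (2*m) x).
      { destruct Hx as [dd [Hd [H1 H2]]]. intros i Hi E. pose proof (H1 i Hi). rewrite E, Rabs_R0 in H. lra. }
      apply (lin_main m a l lam x gs c); auto.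
      intros q Hq E. destruct Hx as [dd [Hd [H1 H2]]]. pose proof (H2 q Hq). rewrite E, Rabs_R0 in H. lra.
Qed.
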